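(* Let $H$ be a near-quadrangulation and let $G$ be the patch extension of $H$. If a viable 4-coloring $\varphi$ of the boundary of the outer face of $G$ extends to a 4-coloring of $G$, then $\varphi$ is null-homotopic on the cycle $C$ bounding the outer face of $G$.
   Context: A near-quadrangulation is a 2-connected plane graph all of whose faces other than the outer one have length four (it is bipartite). The patch extension of a 2-connected bipartite plane graph $B$ is the hued plane graph obtained by adding into each non-outer face of $B$ a new vertex adjacent to all vertices on the boundary of that face; the vertices of $B$ get hues $0$ and $1$ according to the bipartition and the new vertices get hue $2$. Hues are values in $\mathbb{Z}_3$; a 4-coloring is a proper coloring with colors in $\mathbb{Z}_2^2$; for a hued graph $K$ and 4-coloring $\varphi$, $K^\varphi$ is the graph with both hue and color. Homomorphisms to $\mathbf{T}$ map adjacent vertices to adjacent vertices and preserve hue and color, where the dappled triangular grid $\mathbf{T}$ has vertex set $\mathbb{Z}^2$, with $(i_1,j_1),(i_2,j_2)$ adjacent iff $(i_2-i_1,j_2-j_1)\in\{\pm(1,0),\pm(0,1),\pm(1,1)\}$, hue $(i+j)\bmod 3$ and color $(i\bmod 2,j\bmod 2)$. $\varphi$ is viable on connected hued $K$ if $K^\varphi$ has a homomorphism to $\mathbf{T}$. For a closed walk $Z$, a one-step retraction deletes $u_{i+1},u_{i+2}$ from a cyclically consecutive triple $u_iu_{i+1}u_{i+2}$ with $u_i=u_{i+2}$ (length-two closed walks retract to empty); $Z$ is null-homotopic if repeated one-step retractions reduce it to the empty walk. A viable coloring $\varphi$ is null-homotopic on a closed walk (here the cycle $C$) if the closed walks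 $f(C)$, for homomorphisms $f$ from $C^\varphi$ to $\mathbf{T}$, are null-homotopic. *)

(* Defs.v *)
From HB Require Import structures.
From mathcomp Require Import all_boot all_order all_algebra perm.
Set Implicit Arguments. Unset Strict Implicit. Unset Printing Implicit Defensive.
Import GRing.Theory Num.Theory.

(* Plane graphs as combinatorial maps (rotation systems).              *)
(* Darts D, vertices V, [tail x] = vertex at which dart x starts,       *)
(* [e] = edge involution (reverse dart), [n] = rotation of darts around *)
(* a vertex.  Faces are the orbits of [face x := n (e x)].             *)
(* Genus 0 (planarity) is expressed by Euler's formula V - E + F = 2   *)
(* (with E = #|D|/2), for a connected map.                             *)
Section Maps.
Variables (V D : finType) (tail : D -> V) (e n : {perm D}).

Definition face (x : D) : D := n (e x).

Definition adjH (u v : V) : bool :=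
  [exists x : D, (tail x == u) && (tail (e x) == v)].

Definition simple_map : Prop :=
  [/\ forall x, e (e x) = x,
      forall x, tail (e x) != tail x
    & forall x y, tail x = tail y -> tail (e x) = tail (e y) -> x = y].

Definition vertex_rotation : Prop :=
  (forall x y, fconnect n x y = (tail x == tail y)) /\
  (forall v : V, exists x : D, tail x = v).

Definition two_connected : Prop :=
  (3 <= #|V|)%N /\
  forall w u v : V, u != w -> v != w ->
    connect [rel a b | adjH a b && (a != w) && (b != w)] u v.

(* Euler's formula: 2 (#V + #F) = #D + 4, i.e. V - E + F = 2 *)
Definition euler_planar : Prop :=
  (2 * (#|V| + #|[pred x : D | froot face x == x]|) = #|D| + 4)%N.

Definition near_quadrangulation (o : D) : Prop :=
  [/\ simple_map, vertex_rotation, two_connected, euler_planar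
    & forall x : D, ~~ fconnect face o x -> order face x = 4%N].

Definition outer_boundary (o : D) : seq V := [seq tail x | x <- orbit face o].

(* inner faces are represented by their canonical dart (froot) *)
Definition inner_face_rep (o : D) (x : D) : bool :=
  (froot face x == x) && ~~ fconnect face o x.

Definition GV (o : D) : finType := (V + {x : D | inner_face_rep o x})%type.

Definition on_face (F : D) (u : V) : bool :=
  [exists y : D, fconnect face F y && (tail y == u)].

Definition adjG (o : D) (a b : GV o) : bool :=
  match a, b with
  | inl u, inl v => adjH u v
  | inl u, inr F => on_face (val F) u
  | inr F, inl u => on_face (val F) u
  | inr _, inr _ => false
  end.

(* hues of the patch extension: the bipartition class h of H gives hues
   0/1, the new face vertices get hue 2 *)
Definition hueG (o : D) (h : V -> bool) (a : GV o) : nat :=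
  match a with inl v => nat_of_bool (h v) | inr _ => 2%N end.

End Maps.

(* proper 4-colorings, colors in Z_2^2 = bool * bool *)
Definition four_coloring (T : finType) (adj : rel T) (c : T -> bool * bool) : Prop :=
  forall a b, adj a b -> c a != c b.

Definition adjT (p q : int * int) : bool :=
  ((q.1 - p.1)%R, (q.2 - p.2)%R) \in
    ([:: (1, 0); (-1, 0); (0, 1); (0, -1); (1, 1); (-1, -1)]%R : seq (int * int)).

Definition hueT (p : int * int) : nat := `|((p.1 + p.2)%R %% 3)%Z|%N.

Definition colT (p : int * int) : bool * bool := (odd `|p.1|%N, odd `|p.2|%N).

(* g : V -> Z^2 restricted to the vertices of the cycle s is a homomorphism
   of the hued, colored cycle s^phi to T *)
Definition cycle_hom (V : eqType) (s : seq V) (hue : V -> nat)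
  (col : V -> bool * bool) (g : V -> int * int) : bool :=
  cycle (fun u v => adjT (g u) (g v)) s &&
  all (fun v => (hueT (g v) == hue v) && (colT (g v) == col v)) s.

Definition viable_on_cycle (V : eqType) (s : seq V) (hue : V -> nat)
  (col : V -> bool * bool) : Prop :=
  exists g, cycle_hom s hue col g.

Definition retract_step (s t : seq (int * int)) : Prop :=
  (size s = 2%N /\ t = [::]) \/
  exists i u v r, rot i s = u :: v :: u :: r /\ t = u :: r.

Inductive null_homotopic : seq (int * int) -> Prop :=
| nh_nil : null_homotopic [::]
| nh_step s t : retract_step s t -> null_homotopic t -> null_homotopic s.

Definition null_homotopic_on_cycle (V : eqType) (s : seq V) (hue : V -> nat)
  (col : V -> bool * bool) : Prop :=
  forall g, cycle_hom s hue col g -> null_homotopic (map g s).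

(* Main.v *)
Require Import Defs.
From mathcomp Require Import all_boot all_order all_algebra perm zify ring.
Import GRing.Theory Num.Theory.
Set Implicit Arguments. Unset Strict Implicit. Unset Printing Implicit Defensive.

Lemma adjT_cases (p q : int * int) : adjT p q ->
  exists2 d : int * int, d \in [:: (1, 0); (-1, 0); (0, 1); (0, -1); (1, 1); (-1, -1)]%R &
  q = (p.1 + d.1, p.2 + d.2)%R.
Proof.
rewrite /adjT => H; exists ((q.1 - p.1), (q.2 - p.2))%R => //.
case: p q {H} => a b [c d] /=; congr pair; lia.
Qed.

Lemma oddabs_mod (u v : int) : odd (absz u) = odd (absz v) -> ((u - v) %% 2 = 0)%Z.
Proof. case: (odd _) / idP; case: (odd _) / idP => //=; lia. Qed.

Lemma adjT_uniq p q r : adjT p q -> adjT p r -> hueT q = hueT r -> colT q = colT r -> q = r.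
Proof.
move=> /adjT_cases [d1 Hd1 ->] /adjT_cases [d2 Hd2 ->].
rewrite /hueT /colT; case: p => a b /=.
move=> H3 [/oddabs_mod H4 /oddabs_mod H5].
move: H3 H4 H5; move: Hd1 Hd2; rewrite !inE => Hd1 Hd2.
do 5?[case/orP: Hd1 => [/eqP -> | Hd1]]; try move/eqP: Hd1 => ->;
do 5?[case/orP: Hd2 => [/eqP -> | Hd2]]; try move/eqP: Hd2 => ->; rewrite //=.
all: move=> H3 H4 H5; exfalso; move: H3 H4 H5; lia.
Qed.
Lemma adjT_E (p q : int * int) : adjT p q =
  [|| ((q.1 - p.1 == 1) && (q.2 - p.2 == 0)), ((q.1 - p.1 == -1) && (q.2 - p.2 == 0)),
      ((q.1 - p.1 == 0) && (q.2 - p.2 == 1)), ((q.1 - p.1 == 0) && (q.2 - p.2 == -1)),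
      ((q.1 - p.1 == 1) && (q.2 - p.2 == 1)) | ((q.1 - p.1 == -1) && (q.2 - p.2 == -1))]%R.
Proof. by rewrite /adjT !inE !xpair_eqE. Qed.

Lemma adjT_irr p : ~~ adjT p p.
Proof. rewrite adjT_E; case: p => a b /=; apply/negP; lia. Qed.

Lemma adjT_sym p q : adjT p q -> adjT q p.
Proof. rewrite !adjT_E; case: p => a b; case: q => c d /=; lia. Qed.

Lemma hueT_lt3 p : (hueT p < 3)%N.
Proof. rewrite /hueT; case: p => a b /=; lia. Qed.

Lemma adjT_hue p q : adjT p q -> hueT p != hueT q.
Proof. rewrite adjT_E /hueT; case: p => a b; case: q => c d /=; lia. Qed.


Lemma nth_rot_mod (T : Type) (x0 : T) k (s : seq T) m :
  (k <= size s)%N -> (m < size s)%N -> nth x0 (rot k s) m = nth x0 s ((k + m) %% size s).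
Proof.
move=> Hk Hm; rewrite /rot nth_cat size_drop.
case: ltnP => H.
  rewrite nth_drop modn_small //; lia.
rewrite nth_take; last by lia.
have -> : (k + m = (m - (size s - k)) + size s)%N by lia.
rewrite modnDr modn_small //; lia.
Qed.

Lemma cycle_nth (T : Type) (x0 : T) (R : rel T) (s : seq T) :
  (0 < size s)%N -> cycle R s -> forall j, R (nth x0 s (j %% size s)) (nth x0 s (j.+1 %% size s)).
Proof.
case: s => [|x p] //= _ Hc j.
set L := (size p).+1.
move/(pathP x0): Hc => Hc.
have Hj : (j %% L < L)%N by rewrite ltn_mod.
have := Hc (j %% L); rewrite size_rcons => /(_ Hj).
have E1 : nth x0 (x :: rcons p x) (j %% L) = nth x0 (x :: p) (j %% L).
  case E: (j %% L) => [|i] //=; rewrite nth_rcons; case: ltnP => //; lia.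
rewrite E1.
have E2 : nth x0 (rcons p x) (j %% L) = nth x0 (x :: p) (j.+1 %% L).
  rewrite nth_rcons.
  case: (ltnP (j %% L) (size p)) => H.
    have -> : (j.+1 %% L = (j %% L).+1)%N.
      rewrite -addn1 -modnDml modn_small //; rewrite /L in H Hj *; lia.
    done.
  have -> : (j.+1 %% L = 0)%N.
    rewrite -addn1 -modnDml.
    have -> : (j %% L + 1 = L)%N by rewrite /L in H Hj *; lia.
    by rewrite modnn.
  by rewrite ifT //; rewrite /L in H Hj *; apply/eqP; lia.
by rewrite E2.
Qed.

Lemma flip_exists (f : nat -> bool) d : f 2 != f d -> (2 <= d)%N ->
  exists k, (2 <= k < d)%N && (f k != f k.+1).
Proof.
elim: d => [|d IH] // Hf Hd.
case: (ltnP d 2) => Hd2.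
  have Ed : d = 1%N by lia.
  by subst d; rewrite eqxx in Hf.
case E: (f d == f d.+1).
  have Hf' : f 2 != f d by rewrite (eqP E).
  case: (IH Hf' Hd2) => k /andP[Hk1 Hk2]; exists k; rewrite Hk2 andbT; lia.
by exists d; rewrite E andbT; lia.
Qed.

Section Find.
Variables (A : Type) (W : eqType) (node : nat -> A) (wl : A -> W) (sg : A -> W -> bool).
Hypothesis Hflip : forall j w, (sg (node j) w != sg (node j.+1) w) = (wl (node j) == w).
Hypothesis HC3 : forall i j w, wl (node i) = wl (node j) -> w != wl (node i) ->
  sg (node i) w = sg (node j) w.

Lemma find_adj d i : (0 < d)%N -> wl (node i) = wl (node (i + d)) ->
  exists j, wl (node j) = wl (node j.+1).
Proof.
elim: d {-2}d (leqnn d) i => [|D IH] d Hd i Hd0 Heq; first by lia.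
case: (ltnP d 2) => Hd2.
  have Ed : d = 1%N by lia.
  by subst d; exists i; rewrite -addn1.
case E: (wl (node i) == wl (node i.+1)); first by exists i; apply/eqP.
set W1 := wl (node i.+1).
pose f k := sg (node (i + k)) W1.
have HW : W1 != wl (node i) by rewrite eq_sym E.
have f0d : f 0 = f d by rewrite /f addn0; apply: HC3.
have f01 : f 0 = f 1.
  rewrite /f addn0 addn1; apply/eqP; move: (Hflip i W1).
  by rewrite [wl (node i) == W1]eq_sym (negbTE HW) => /negbFE.
have f12 : f 1 != f 2.
  by rewrite /f addn1 addnS addn1 Hflip eqxx.
have : f 2 != f d by rewrite -f0d f01 eq_sym.
move/flip_exists => /(_ Hd2) [k /andP[Hk Hfk]].
apply: (IH (k.-1) _ i.+1); [lia | lia |].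
move: Hfk; rewrite /f addnS Hflip => /eqP H.
rewrite -/W1 -H; congr (wl (node _)); lia.
Qed.
End Find.

Definition addc (p q : bool * bool) : bool * bool := (p.1 (+) q.1, p.2 (+) q.2).

Lemma addc_cancel p q r : addc p q = addc q r -> p = r.
Proof. by case: p q r => [[] []] [[] []] [[] []]. Qed.

Section Abs.
Variables (A : eqType) (W : finType) (pt : A -> int * int) (wl : A -> W)
  (sg : A -> W -> bool) (lab : W -> bool * bool).

Definition Rz : rel A := fun a b =>
  [&& adjT (pt a) (pt b), addc (colT (pt a)) (colT (pt b)) == lab (wl a)
    & [forall w, (sg a w != sg b w) == (wl a == w)]].

Definition Inv (z : seq A) :=
  [/\ cycle Rz z, all (fun a => hueT (pt a) != 2) z &
      {in z &, forall a b, wl a = wl b -> forall w, w != wl a -> sg a w = sg b w}].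

Lemma Rz_congr x a c : pt c = pt a -> (forall w, sg c w = sg a w) -> Rz x a -> Rz x c.
Proof.
move=> Hp Hs /and3P[H1 H2 /forallP H3]; apply/and3P; split; rewrite ?Hp //.
by apply/forallP => w; rewrite Hs.
Qed.

Lemma abs_nh z : Inv z -> null_homotopic (map pt z).
Proof.
have [n] := ubnP (size z); elim: n z => // n IH z Hz [Hc Hh H3].
case E: z Hc => [|a0 z0] Hc; first by constructor.
rewrite -E in Hc.
case: z0 E => [|a1 z1] E.
  by move: Hc; rewrite E /= /Rz (negbTE (adjT_irr _)).
case: z1 E => [|a2 z2] E.
  apply: (@nh_step _ [::]); last by constructor.
  by left.
rewrite -E.
set L := size z.
have HL : (2 < L)%N by rewrite /L E.
pose node j := nth a0 z (j %% L).
have Rn : forall j, Rz (node j) (node j.+1).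
  by move=> j; apply: cycle_nth => //; lia.
have [j Hj] : exists j, wl (node j) = wl (node j.+1).
  apply: (@find_adj _ _ node wl sg _ _ L 0) => //.
  - move=> i w; by have /and3P[_ _ /forallP /(_ w) /eqP] := Rn i.
  - move=> i k w Hik Hw; apply: H3 => //; apply: mem_nth; rewrite ltn_mod; lia.
  - lia.
  - by rewrite /node modnn mod0n.
set k := j %% L.
have Hk : (k <= L)%N by rewrite /k; apply: ltnW; rewrite ltn_mod; lia.
have N0 : nth a0 (rot k z) 0 = node j by rewrite nth_rot_mod ?addn0 ?modn_mod //; lia.
have N1 : nth a0 (rot k z) 1 = node j.+1.
  have Hs1 : (1 < size z)%N by rewrite /L in HL; lia.
  by rewrite nth_rot_mod // /node /k modnDml addn1.
have N2 : nth a0 (rot k z) 2 = node j.+2.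
  have Hs1 : (2 < size z)%N by rewrite /L in HL; lia.
  by rewrite nth_rot_mod // /node /k modnDml addn2.
have Hsz : size (rot k z) = L by rewrite size_rot.
case Ez : (rot k z) Hsz N0 N1 N2 => [|a [|b [|c r]]] //= Hsz; try lia.
move=> Na Nb Nc.
have Hc' : cycle Rz (a :: b :: c :: r) by rewrite -Ez rot_cycle.
move: Hc' => /= /and3P[Rab Rbc Hpath].
have Hab : wl a = wl b by rewrite Na Nb.
have Hall : all (fun a => hueT (pt a) != 2) (a :: b :: c :: r) by rewrite -Ez; apply/allP => x; rewrite mem_rot; move: x; apply/allP.
move: (Hall) => /= /and4P[ha hb hc hr].
have Hpc : pt c = pt a.
  move: Rab Rbc => /and3P[A1 A2 _] /and3P[B1 B2 _].
  apply: (@adjT_uniq (pt b)) => //; first exact: adjT_sym.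
    move: (adjT_hue A1) (adjT_hue B1) (hueT_lt3 (pt a)) (hueT_lt3 (pt b)) (hueT_lt3 (pt c)) ha hb hc.
    move=> H1 H2 H4 H5 H6 H7 H8 H9; apply/eqP; lia.
  symmetry; apply: (@addc_cancel _ (colT (pt b))).
  by rewrite (eqP A2) (eqP B2) Hab.
have Hsc : forall w, sg c w = sg a w.
  move=> w; move: Rab Rbc => /and3P[_ _ /forallP /(_ w) /eqP A3] /and3P[_ _ /forallP /(_ w) /eqP B3].
  move: A3 B3; rewrite -Hab; case: (wl a == w); case: (sg a w); case: (sg b w); case: (sg c w) => //.
apply: (@nh_step _ (map pt (c :: r))).
  right; exists k, (pt a), (pt b), (map pt r); split.
    by rewrite -map_rot Ez /= Hpc.
  by rewrite /= Hpc.
apply: IH.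
  rewrite /=; move: Hz; rewrite -/L -Hsz; lia.
have Hmem : forall x, x \in c :: r -> x \in z.
  move=> x; rewrite -(mem_rot k z) Ez !inE => /orP[->|->]; by rewrite ?orbT.
split.
- move: Hpath; rewrite /= !rcons_path => /andP[-> Hl] /=.
  exact: Rz_congr Hl.
- by move: hr => /= ->; rewrite hc.
- move=> x y Hx Hy; apply: H3; exact: Hmem.
Qed.
End Abs.

Section Basic.
Variables (V D : finType) (tail : D -> V) (e n : {perm D}).
Hypothesis Hs : simple_map tail e.
Hypothesis Hv : vertex_rotation tail n.
Hypothesis Hc : two_connected tail e.

Local Notation fc := (face e n).

Lemma eK x : e (e x) = x. Proof. by case: Hs. Qed.
Lemma e_neq x : e x != x.
Proof. case: Hs => _ H _; apply/eqP => E; move: (H x); by rewrite E eqxx. Qed.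
Lemma tail_n x : tail (n x) = tail x.
Proof. case: Hv => H _; apply/esym/eqP; rewrite -H; exact: fconnect1. Qed.
Lemma tail_fc x : tail (fc x) = tail (e x).
Proof. by rewrite /face tail_n. Qed.
Lemma fc_inj : injective fc.
Proof. by move=> x y; rewrite /face => /perm_inj /perm_inj. Qed.
Lemma n_fc x : n x = fc (e x).
Proof. by rewrite /face eK. Qed.

Lemma connH u v : connect (adjH tail e) u v.
Proof.
case: Hc => H3 H.
have : (0 < #|[predC pred2 u v]|)%N.
  move: (cardC (pred2 u v)); rewrite card2 => E.
  rewrite lt0n; apply/negP => /eqP K; move: H3; rewrite -E K; by case: (u != v).
case/card_gt0P => w; rewrite !inE negb_or => /andP[Hu Hv'].
have Hu' : u != w by rewrite eq_sym.
have Hv2 : v != w by rewrite eq_sym.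
apply: (connect_sub _ (H w u v Hu' Hv2)).
move=> a b /= /andP[/andP[Hab _] _]; exact: connect1.
Qed.

Lemma conn_closed (T : finType) (S : pred T) (P : rel T) :
  (forall x y, P x y -> S x -> S y) -> forall x y, connect P x y -> S x -> S y.
Proof.
move=> HP x y /connectP [p Hp ->] {y}.
elim: p x Hp => [|z p IH] x //= /andP[Hxz Hp] Sx.
exact: IH Hp (HP _ _ Hxz Sx).
Qed.

Lemma dart_closure (S : pred D) x0 :
  (forall x, S x -> S (e x)) -> (forall x, S x -> S (n x)) -> S x0 -> forall x, S x.
Proof.
move=> Se Sn Sx0.
have Stail : forall y y', S y -> tail y = tail y' -> S y'.
  move=> y y' Sy Ht; case: Hv => H _.
  have : fconnect n y y' by rewrite H Ht.
  move/conn_closed; apply => // a b /eqP <-; exact: Sn.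
pose P (v : V) := [exists y, S y && (tail y == v)].
have Pv : forall v, P v.
  move=> v; apply: (@conn_closed V P (adjH tail e) _ (tail x0)).
  - move=> a b /existsP [d /andP[/eqP Hd1 /eqP Hd2]] /existsP [y /andP [Sy /eqP Hy]].
    apply/existsP; exists (e d); rewrite Hd2 eqxx andbT; apply: Se.
    by apply: Stail Sy _; rewrite Hy Hd1.
  - exact: connH.
  - by apply/existsP; exists x0; rewrite Sx0 eqxx.
move=> x; case/existsP: (Pv (tail x)) => y /andP[Sy /eqP Hy].
exact: Stail Sy Hy.
Qed.

End Basic.

Section F2.
Local Open Scope ring_scope.

Lemma F2_cases (a : 'F_2) : a = 0 \/ a = 1.
Proof.
have : (nat_of_ord a < 2)%N by apply: ltn_ord.
case E: (nat_of_ord a) => [|[|m]] H.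
- by left; apply: val_inj; rewrite /= E.
- by right; apply: val_inj; rewrite /= E.
- by [].
Qed.
Lemma F2_add_self (a : 'F_2) : a + a = 0.
Proof. by case: (F2_cases a) => ->; apply/eqP. Qed.
Lemma F2_addeq0 (a b : 'F_2) : (a + b == 0) = (a == b).
Proof. by case: (F2_cases a) => ->; case: (F2_cases b) => ->. Qed.
Lemma F2_natr m : (m%:R : 'F_2) = (odd m)%:R.
Proof. by rewrite -(@Fp_nat_mod 2) // modn2. Qed.
Lemma F2_bool (a b : 'F_2) : (a + b != 0) = ((a != 0) != (b != 0)).
Proof. by case: (F2_cases a) => ->; case: (F2_cases b) => ->. Qed.
Lemma F2_b2 (b : bool) : ((b%:R : 'F_2) != 0) = b.
Proof. by case: b. Qed.

End F2.

Section Cut.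
Variables (V D : finType) (tail : D -> V) (e n : {perm D}) (o : D).
Hypothesis Hs : simple_map tail e.
Hypothesis Hv : vertex_rotation tail n.
Hypothesis Hc : two_connected tail e.

Local Notation fc := (face e n).

Definition Rp : pred D := fun x => (enum_rank x < enum_rank (e x))%N.

Lemma Rp_e x : Rp (e x) = ~~ Rp x.
Proof.
rewrite /Rp (eK Hs).
have H : (nat_of_ord (enum_rank (e x)) != nat_of_ord (enum_rank x)).
  by apply/negP => /eqP /val_inj /enum_rank_inj E; move: (e_neq Hs x); rewrite E eqxx.
by rewrite -leqNgt ltn_neqAle H.
Qed.

Lemma sum_Rp (R : Type) (idx : R) (op : Monoid.com_law idx) (G : D -> R) :
  \big[op/idx]_(x | Rp x) op (G x) (G (e x)) = \big[op/idx]_x G x.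
Proof.
rewrite big_split /= [RHS](bigID Rp) /=; congr (op _ _).
rewrite (reindex_inj (@perm_inj _ e)) /=; apply: eq_big => x.
  by rewrite Rp_e.
by rewrite (eK Hs).
Qed.

Lemma fconn_sym x y : fconnect fc x y = fconnect fc y x.
Proof. exact: (fconnect_sym (fc_inj (e:=e) (n:=n))). Qed.

Lemma froot_fc x : froot fc (fc x) = froot fc x.
Proof.
apply/esym/(fingraph.rootP (fconnect_sym (fc_inj (e:=e) (n:=n)))); exact: fconnect1.
Qed.

Lemma froot_eq x r : froot fc r = r -> (froot fc x == r) = fconnect fc r x.
Proof.
move=> Hr; rewrite -(root_connect (fconnect_sym (fc_inj (e:=e) (n:=n)))) Hr.
by rewrite eq_sym.
Qed.

Local Open Scope ring_scope.

Definition Fp : pred D := fun x => (froot fc x == x) && ~~ fconnect fc o x.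
Definition inc (v : V) (x : D) : 'F_2 := (tail x == v)%:R + (tail (e x) == v)%:R.
Definition finc (x r : D) : 'F_2 := (froot fc x == r)%:R + (froot fc (e x) == r)%:R.
Definition Amx : 'M['F_2]_(#|V|, #|Rp|) := \matrix_(i, j) inc (enum_val i) (enum_val j).
Definition Bmx : 'M['F_2]_(#|Rp|, #|Fp|) := \matrix_(j, f) finc (enum_val j) (enum_val f).

Lemma sum_pick (u : 'I_#|V| -> 'F_2) (w : V) :
  \sum_(i < #|V|) u i * (w == enum_val i)%:R = u (enum_rank w).
Proof.
rewrite (bigD1 (enum_rank w)) //= enum_rankK eqxx mulr1 big1 ?addr0 // => i Hi.
case: eqP => [E|]; last by rewrite mulr0.
by move: Hi; rewrite E enum_valK eqxx.
Qed.

Lemma sum_pickF (u : 'I_#|Fp| -> 'F_2) (f : 'I_#|Fp|) :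
  \sum_(f' < #|Fp|) u f' * (enum_val f == enum_val f')%:R = u f.
Proof.
rewrite (bigD1 f) //= eqxx mulr1 big1 ?addr0 // => i Hi.
case: eqP => [/enum_val_inj E|]; last by rewrite mulr0.
by move: Hi; rewrite E eqxx.
Qed.

Lemma sum_ev (G : D -> 'F_2) :
  \sum_(j < #|Rp|) G (enum_val j) = \sum_(x | Rp x) G x.
Proof. by rewrite -(big_enum_val (A := Rp)). Qed.

Lemma AB0 : Amx *m Bmx = 0.
Proof.
apply/matrixP => i f; rewrite !mxE.
set v := enum_val i; set r := enum_val f.
pose K x : 'F_2 := (froot fc x == r)%:R * (tail x == v)%:R.
pose H x : 'F_2 := K x + K (fc x).
rewrite (eq_bigr (fun j => inc v (enum_val j) * finc (enum_val j) r)); last first.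
  by move=> j _; rewrite !mxE.
rewrite (sum_ev (fun x => inc v x * finc x r)) (eq_bigr (fun x => H x + H (e x))); last first.
  move=> x _; rewrite /H /K /inc /finc !froot_fc !(tail_fc e Hv) (eK Hs); ring.
rewrite (@sum_Rp _ 0 +%R H) /H big_split /=.
by rewrite [X in X + _](reindex_inj (@fc_inj _ e n)) F2_add_self.
Qed.

Lemma rowA_entry (u : 'rV['F_2]_#|V|) j :
  (u *m Amx) 0 j = u 0 (enum_rank (tail (enum_val j))) + u 0 (enum_rank (tail (e (enum_val j)))).
Proof.
rewrite !mxE (eq_bigr (fun i => u 0 i * (tail (enum_val j) == enum_val i)%:R +
   u 0 i * (tail (e (enum_val j)) == enum_val i)%:R)); last first.
  by move=> i _; rewrite !mxE mulrDr.
by rewrite big_split /= (sum_pick (fun i => u 0 i)) (sum_pick (fun i => u 0 i)).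
Qed.

Lemma rep_or x : Rp x \/ Rp (e x).
Proof. by rewrite Rp_e; case: (Rp x); [left|right]. Qed.

Lemma rowA_dart (u : 'rV['F_2]_#|V|) (P : 'F_2 -> 'F_2 -> bool) :
  (forall a b, P a b = P b a) ->
  (forall j : 'I_#|Rp|, P (u 0 (enum_rank (tail (enum_val j)))) (u 0 (enum_rank (tail (e (enum_val j)))))) ->
  forall x, P (u 0 (enum_rank (tail x))) (u 0 (enum_rank (tail (e x)))).
Proof.
move=> Psym Pj x.
case: (rep_or x) => Hx.
  have Hx' : x \in Rp by [].
  by have := Pj (enum_rank_in Hx' x); rewrite enum_rankK_in.
have Hx' : e x \in Rp by [].
by have := Pj (enum_rank_in Hx' (e x)); rewrite enum_rankK_in // (eK Hs) Psym.
Qed.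

Lemma kerA (u : 'rV['F_2]_#|V|) : u *m Amx = 0 -> (u <= (const_mx 1 : 'rV['F_2]_#|V|))%MS.
Proof.
move=> Hu.
pose U v := u 0 (enum_rank v).
have HU : forall x, U (tail x) == U (tail (e x)).
  apply: (@rowA_dart u (fun a b => a == b)); first by move=> a b; rewrite eq_sym.
  by move=> j; rewrite -F2_addeq0 -rowA_entry Hu mxE.
have Hconst : forall v, U v = U (tail o).
  move=> v; apply/eqP; apply: (@conn_closed _ [pred w | U w == U (tail o)] (adjH tail e) _ (tail o) v) => //.
  - move=> a b /existsP [d /andP[/eqP Hd1 /eqP Hd2]] /=; rewrite -Hd1 -Hd2 => /eqP <-.
    by rewrite eq_sym.
  - exact: connH.
  - by rewrite /= eqxx.
have -> : u = U (tail o) *: const_mx 1.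
  apply/rowP => i; rewrite !mxE mulr1 -(Hconst (enum_val i)) /U.
  by rewrite enum_valK.
by apply: scalemx_sub; exact: submx_refl.
Qed.

Lemma rankA : (#|V| - \rank Amx <= 1)%N.
Proof.
rewrite -mxrank_ker.
have : (kermx Amx <= (const_mx 1 : 'rV['F_2]_#|V|))%MS.
  apply/row_subP => i; apply: kerA.
  by rewrite -row_mul mulmx_ker row0.
move/mxrankS => H; apply: leq_trans H _; exact: rank_leq_row.
Qed.

Lemma kerBt (u : 'rV['F_2]_#|Fp|) : u *m Bmx^T = 0 -> u = 0.
Proof.
move=> Hu.
pose U x := \sum_(f < #|Fp|) u 0 f * (froot fc x == enum_val f)%:R.
have Hj : forall j : 'I_#|Rp|, U (enum_val j) + U (e (enum_val j)) = 0.
  move=> j; move/matrixP: Hu => /(_ 0 j); rewrite !mxE => <-.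
  rewrite -big_split /=; apply: eq_bigr => f _; rewrite !mxE /finc mulrDr.
  by rewrite !(@eq_sym _ (froot _ _)).
have He : forall x, U x = U (e x).
  move=> x; case: (rep_or x) => Hx.
    have Hx' : x \in Rp by [].
    by have := Hj (enum_rank_in Hx' x); rewrite enum_rankK_in // => /eqP; rewrite F2_addeq0 => /eqP.
  have Hx' : e x \in Rp by [].
  have := Hj (enum_rank_in Hx' (e x)); rewrite enum_rankK_in // (eK Hs).
  by move/eqP; rewrite F2_addeq0 => /eqP.
have Hf : forall x, U (fc x) = U x by move=> x; rewrite /U froot_fc.
have Ho : U o = 0.
  rewrite /U big1 // => f _.
  case: eqP => [E|]; last by rewrite mulr0.
  have := enum_valP f; rewrite unfold_in /Fp -E => /andP[_].
  by move/negP; case; exact: connect_root.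
apply/rowP => f; rewrite mxE; case: (F2_cases (u 0 f)) => // Hf0.
have Sf : U (enum_val f) != 0.
  have := enum_valP f; rewrite unfold_in /Fp => /andP[/eqP Hr _].
  by rewrite /U Hr sum_pickF Hf0.
have HSe : forall x, U x != 0 -> U (e x) != 0 by move=> x; rewrite -He.
have HSn : forall x, U x != 0 -> U (n x) != 0 by move=> x; rewrite (n_fc n Hs) Hf -He.
have := @dart_closure V D tail e n Hv Hc [pred x | U x != 0] (enum_val f) HSe HSn Sf o.
by rewrite /= Ho eqxx.
Qed.

Lemma rankB : \rank Bmx = #|Fp|.
Proof.
have K0 : kermx Bmx^T = 0.
  apply/row_matrixP => i; rewrite row0; apply: kerBt.
  by rewrite -row_mul mulmx_ker row0.
have := mxrank_ker Bmx^T; rewrite K0 mxrank0 mxrank_tr => /esym /eqP; rewrite subn_eq0 => H.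
by apply/eqP; rewrite eqn_leq H -(mxrank_tr Bmx) rank_leq_row.
Qed.

Lemma card_D : #|D| = (2 * #|Rp|)%N.
Proof.
have := @sum_Rp nat 0%N addn (fun _ => 1%N).
rewrite (eq_bigr (fun _ => 2%N)) // sum_nat_const sum1_card => <-.
by rewrite mulnC.
Qed.

Lemma card_roots : #|[pred x | froot fc x == x]| = (#|Fp| + 1)%N.
Proof.
have Hsym := fconnect_sym (@fc_inj _ e n).
rewrite -[LHS](cardID (fconnect fc o)) [RHS]addnC; congr (_ + _)%N.
  apply: (@eq_card1 _ (froot fc o)) => x; rewrite !inE.
  apply/idP/idP.
    case/andP => /eqP Hx Hox; apply/eqP; rewrite -Hx.
    by apply/esym/(fingraph.rootP Hsym).
  move/eqP => ->; rewrite (root_root Hsym) eqxx /=.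
  exact: connect_root.
by apply: eq_card => x; rewrite !inE /Fp andbC.
Qed.

Lemma sum_boolR (T : finType) (P : pred T) :
  \sum_(x : T) ((P x)%:R : 'F_2) = (#|P|)%:R.
Proof.
rewrite (bigID P) /= [X in _ + X]big1 ?addr0; last by move=> x /negbTE ->.
rewrite (eq_bigr (fun _ => 1)); last by move=> x ->.
have -> : \sum_(x | P x) (1 : 'F_2) = \sum_(x in P) 1 by apply: eq_bigl.
by rewrite sumr_const.
Qed.

Hypothesis He : euler_planar V e n.

Lemma euler_count : (#|Rp| + 1 = #|V| + #|Fp|)%N.
Proof.
move: He; rewrite /euler_planar card_D card_roots; lia.
Qed.

Lemma cut_lemma (X : pred D) :
  (forall x, X (e x) = X x) ->
  (forall r, Fp r -> ~~ odd #|[pred y | fconnect fc r y && X y]|) ->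
  exists sigma : V -> bool, forall x, (sigma (tail x) != sigma (tail (e x))) = X x.
Proof.
move=> HXe HXf.
pose uX : 'rV['F_2]_#|Rp| := \row_j (X (enum_val j))%:R.
have HuB : uX *m Bmx = 0.
  apply/rowP => f; rewrite !mxE.
  set r := enum_val f.
  have Fr : Fp r by have := enum_valP f.
  pose G x : 'F_2 := (X x)%:R * (froot fc x == r)%:R.
  rewrite (eq_bigr (fun j => (X (enum_val j))%:R * finc (enum_val j) r)); last first.
    by move=> j _; rewrite !mxE.
  rewrite (sum_ev (fun x => (X x)%:R * finc x r)).
  rewrite (eq_bigr (fun x => G x + G (e x))); last first.
    by move=> x _; rewrite /G /finc HXe mulrDr.
  rewrite (@sum_Rp _ 0 +%R G).
  rewrite (eq_bigr (fun x => ((fconnect fc r x && X x) : bool)%:R)); last first.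
    move=> x _; rewrite /G froot_eq; last by case/andP: Fr => /eqP.
    by case: (X x); case: (fconnect fc r x); rewrite ?mulr1 ?mulr0.
  rewrite (sum_boolR [pred x | fconnect fc r x && X x]) F2_natr.
  by rewrite (negbTE (HXf r Fr)).
have HAk : (Amx <= kermx Bmx)%MS by apply/sub_kermxP; exact: AB0.
have Hk : (kermx Bmx <= Amx)%MS.
  case: (mxrank_leqif_sup HAk) => _ <-.
  have H1 := mxrankS HAk; have H2 := rankA; have H3 := euler_count.
  move: H1; rewrite mxrank_ker rankB => H1.
  apply/eqP; lia.
have HuX : (uX <= Amx)%MS.
  apply: submx_trans Hk; apply/sub_kermxP; exact: HuB.
case/submxP: HuX => w Hw.
exists (fun v => w 0 (enum_rank v) != 0).
have Hj : forall j : 'I_#|Rp|, ((w 0 (enum_rank (tail (enum_val j))) != 0) !=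
    (w 0 (enum_rank (tail (e (enum_val j)))) != 0)) = X (enum_val j).
  move=> j; rewrite -F2_bool -rowA_entry -Hw mxE.
  exact: F2_b2.
move=> x; case: (rep_or x) => Hx.
  have Hx' : x \in Rp by [].
  by have := Hj (enum_rank_in Hx' x); rewrite enum_rankK_in.
have Hx' : e x \in Rp by [].
have := Hj (enum_rank_in Hx' (e x)); rewrite enum_rankK_in // (eK Hs) HXe.
by rewrite eq_sym.
Qed.

End Cut.

Lemma color5 (c0 c1 c2 c3 cF : bool * bool) :
  c0 != c1 -> c1 != c2 -> c2 != c3 -> c3 != c0 ->
  c0 != cF -> c1 != cF -> c2 != cF -> c3 != cF -> (c0 == c2) || (c1 == c3).
Proof.
by case: c0 => [[] []]; case: c1 => [[] []]; case: c2 => [[] []]; case: c3 => [[] []];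
  case: cF => [[] []].
Qed.

Lemma addcC p q : addc p q = addc q p.
Proof. by rewrite /addc addbC [q.2 (+) _]addbC. Qed.

Lemma card_orbit_count (T : finType) (f : T -> T) (r : T) (P : pred T) :
  #|[pred y | fconnect f r y && P y]| = count P (orbit f r).
Proof.
rewrite -size_filter -(card_uniqP (filter_uniq _ (orbit_uniq f r))).
by apply: eq_card => y; rewrite !inE mem_filter fconnect_orbit andbC.
Qed.

Section Main.
Variables (V D : finType) (tail : D -> V) (e n : {perm D}) (o : D).
Variable (c : GV V e n o -> bool * bool).
Hypothesis Hs : simple_map tail e.
Hypothesis Hv : vertex_rotation tail n.
Hypothesis Hc : two_connected tail e.
Hypothesis He : euler_planar V e n.
Hypothesis H4 : forall x : D, ~~ fconnect (face e n) o x -> order (face e n) x = 4%N.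
Hypothesis Hcol : four_coloring (@adjG V D tail e n o) c.

Local Notation fc := (face e n).
Let Hsym := fconnect_sym (@fc_inj _ e n).

Definition cv (v : V) := c (inl v).
Definition label (x : D) := addc (cv (tail x)) (cv (tail (e x))).
Definition inner (x : D) := ~~ fconnect fc o x.
Definition paired (x y : D) :=
  [&& inner x, y == fc x & cv (tail x) == cv (tail (fc (fc x)))].
Definition wrel : rel D := fun x y =>
  [|| y == e x, x == e y, paired x y | paired y x].

Lemma wrel_sym : symmetric wrel.
Proof. by move=> x y; rewrite /wrel orbA orbC -!orbA orbA orbC -!orbA; do !bool_congr. Qed.

Let Wsym := sym_connect_sym wrel_sym.

Definition wall (x : D) := fingraph.root wrel x.

Lemma wall_eq x y : wrel x y -> wall y = wall x.
Proof. by move=> H; apply/esym/(fingraph.rootP Wsym)/connect1. Qed.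

Lemma tail_fc2 x : tail (e (fc x)) = tail (fc (fc x)).
Proof. by rewrite (tail_fc e Hv). Qed.

Lemma label_paired x : paired x (fc x) -> label (fc x) = label x.
Proof.
case/and3P => _ _ /eqP Hx.
by rewrite /label tail_fc2 -Hx (tail_fc e Hv) addcC.
Qed.

Lemma label_step x y : wrel x y -> label y = label x.
Proof.
case/or4P => [/eqP ->|/eqP ->|H|H].
- by rewrite /label (eK Hs) addcC.
- by rewrite /label (eK Hs) addcC.
- by move: (H) => /and3P[_ /eqP -> _]; rewrite label_paired // -(eqP (proj1 (andP (proj2 (andP H))))).
- by move: (H) => /and3P[_ /eqP -> _]; rewrite label_paired // -(eqP (proj1 (andP (proj2 (andP H))))).
Qed.

Lemma label_wall x : label (wall x) = label x.
Proof.
apply/eqP; apply: (@conn_closed _ [pred y | label y == label x] wrel _ x) => //=.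
- by move=> a b /label_step -> .
- exact: connect_root.
Qed.

Lemma wall_e x : wall (e x) = wall x.
Proof. by apply: wall_eq; rewrite /wrel eqxx. Qed.

Lemma inner_conn r y : inner r -> fconnect fc r y -> inner y.
Proof.
move=> Hr Hry; apply/negP => Hoy; move/negP: Hr; apply.
by apply: connect_trans Hoy _; rewrite Hsym.
Qed.

Lemma face_parity (W : D) r : Fp e n o r ->
  ~~ odd #|[pred y | fconnect fc r y && (wall y == W)]|.
Proof.
move=> Fr; have Hr := Fr; move: Fr => /andP[_ Hin].
have Hr4 := H4 Hin.
rewrite card_orbit_count /orbit Hr4.
have Hfc4 : fc (fc (fc (fc r))) = r.
  by have := iter_order (@fc_inj _ e n) r; rewrite Hr4.
set r1 := fc r; set r2 := fc r1; set r3 := fc r2.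
have In : forall k, inner (iter k fc r).
  by move=> k; apply: inner_conn Hin _; exact: fconnect_iter.
have In0 : inner r := In 0%N.
have In1 : inner r1 := In 1%N.
have In2 : inner r2 := In 2%N.
have In3 : inner r3 := In 3%N.
have Adj : forall x, c (inl (tail x)) != c (inl (tail (fc x))).
  move=> x; apply: Hcol => /=; apply/existsP; exists x.
  by rewrite eqxx (tail_fc e Hv) eqxx.
pose F : GV V e n o := inr (exist _ r Hr).
have Cen : forall k, c (inl (tail (iter k fc r))) != c F.
  move=> k; apply: Hcol => /=; apply/existsP; exists (iter k fc r).
  by rewrite eqxx andbT; exact: fconnect_iter.
have := color5 (Adj r) (Adj r1) (Adj r2) _ (Cen 0%N) (Cen 1%N) (Cen 2%N) (Cen 3%N).
rewrite /= -/r1 -/r2 -/r3.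
have A3 := Adj r3; rewrite -/r3 /= in A3.
move: A3; rewrite /r3 /r2 /r1 Hfc4 -/r1 -/r2 -/r3 => A3.
move/(_ A3) => /orP[] Hcc.
- have P01 : paired r r1 by rewrite /paired In0 eqxx /cv -/r1 -/r2 Hcc.
  have E1 : wall r1 = wall r by apply: wall_eq; rewrite /wrel P01 !orbT.
  have P23 : paired r2 r3.
    by rewrite /paired In2 eqxx /cv /= /r3 /r2 /r1 Hfc4 -/r1 -/r2 eq_sym Hcc.
  have E3 : wall r3 = wall r2 by apply: wall_eq; rewrite /wrel P23 !orbT.
  rewrite /= E1 E3.
  by case: (wall r == W); case: (wall r2 == W).
- have P12 : paired r1 r2 by rewrite /paired In1 eqxx /cv -/r1 -/r2 -/r3 Hcc.
  have E2 : wall r2 = wall r1 by apply: wall_eq; rewrite /wrel P12 !orbT.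
  have P30 : paired r3 r.
    by rewrite /paired In3 /cv /= /r3 /r2 /r1 Hfc4 eqxx -/r1 -/r2 -/r3 eq_sym Hcc.
  have E0 : wall r = wall r3 by apply: wall_eq; rewrite /wrel P30 !orbT.
  rewrite /= E2 E0.
  by case: (wall r1 == W); case: (wall r3 == W).
Qed.

Lemma sigma_exists (W : D) : exists s : {ffun V -> bool},
  [forall x, (s (tail x) != s (tail (e x))) == (wall x == W)].
Proof.
have HXe : forall x, [pred y | wall y == W] (e x) = [pred y | wall y == W] x.
  by move=> x; rewrite /= wall_e.
have HXf : forall r, Fp e n o r ->
    ~~ odd #|[pred y | fconnect fc r y && [pred y | wall y == W] y]|.
  by move=> r Fr; apply: face_parity.
have [sigma Hsig] := @cut_lemma V D tail e n o Hs Hv Hc He _ HXe HXf.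
exists (finfun sigma); apply/forallP => x; rewrite !ffunE Hsig.
by [].
Qed.

Definition sig (W : D) : V -> bool := xchoose (sigma_exists W).

Lemma sig_flip W x : (sig W (tail x) != sig W (tail (e x))) = (wall x == W).
Proof. by have /forallP /(_ x) /eqP := xchooseP (sigma_exists W). Qed.

Lemma sig_wall a b W' : wall a = wall b -> W' != wall a ->
  sig W' (tail a) = sig W' (tail b).
Proof.
move=> Hab HW.
have Hcab : connect wrel a b by apply/(fingraph.rootP Wsym).
pose S := [pred y | (wall y == wall a) && (sig W' (tail y) == sig W' (tail a))].
have HP : forall x y, wrel x y -> S x -> S y.
  move=> x y Hxy /andP[/eqP Hx /eqP Hs'].
  have Hy : wall y = wall x by apply: wall_eq.
  have Nx : (wall x == W') = false by rewrite Hx eq_sym (negbTE HW).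
  have Ny : (wall y == W') = false by rewrite Hy Nx.
  rewrite /S /= Hy Hx eqxx /= -Hs'.
  case/or4P: Hxy => [/eqP ->|/eqP ->|/and3P[_ /eqP -> _]|/and3P[_ /eqP -> _]].
  - by move: (sig_flip W' x); rewrite Nx eq_sym => /negbFE.
  - by move: (sig_flip W' y); rewrite Ny => /negbFE.
  - by rewrite (tail_fc e Hv); move: (sig_flip W' x); rewrite Nx eq_sym => /negbFE.
  - by rewrite (tail_fc e Hv); move: (sig_flip W' y); rewrite Ny => /negbFE.
have := conn_closed HP Hcab; rewrite /S /= !eqxx => /(_ isT) /andP[_ /eqP ->].
by [].
Qed.

Lemma main_nh (h : V -> bool) (phi : V -> bool * bool) (g : V -> int * int) :
  (forall v, v \in outer_boundary tail e n o -> c (inl v) = phi v) ->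
  cycle_hom (outer_boundary tail e n o) (fun v => @hueG V D e n o h (inl v)) phi g ->
  null_homotopic (map g (outer_boundary tail e n o)).
Proof.
move=> Hphi /andP[Hcy Hall].
set z := orbit fc o.
have Hs_def : outer_boundary tail e n o = map tail z by [].
rewrite Hs_def -map_comp.
apply: (@abs_nh D D (g \o tail) wall (fun x W => sig W (tail x)) label).
have Hin : forall a, a \in z -> tail a \in outer_boundary tail e n o.
  by move=> a Ha; rewrite Hs_def; apply: map_f.
have Hgood : forall a, a \in z ->
    (hueT (g (tail a)) == nat_of_bool (h (tail a))) && (colT (g (tail a)) == cv (tail a)).
  move=> a Ha; have := allP Hall _ (Hin a Ha) => /andP[-> /eqP ->].
  by rewrite /cv Hphi // ?eqxx // Hin.
split.
- have C1 : cycle (frel fc) z := cycle_orbit (@fc_inj _ e n) o.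
  have C2 : cycle (fun a b => adjT (g (tail a)) (g (tail b))) z.
    by move: Hcy; rewrite Hs_def cycle_map.
  have C3 : cycle [rel a b | frel fc a b && adjT (g (tail a)) (g (tail b))] z.
    by rewrite cycle_relI C1 C2.
  have Hall' : all [pred x | x \in z] z by apply/allP.
  apply: (@sub_in_cycle _ [pred x | x \in z] _ _ _ z Hall' C3).
  move=> a b Ha Hb /= /andP[/eqP Hab Hadj].
  apply/and3P; split => //.
  + have /andP[_ /eqP ->] := Hgood a Ha.
    have /andP[_ /eqP ->] := Hgood b Hb.
    by rewrite label_wall /label -Hab (tail_fc e Hv).
  + apply/forallP => W; rewrite -Hab /= (tail_fc e Hv) sig_flip.
    by [].
- apply/allP => a Ha /=.
  have /andP[/eqP -> _] := Hgood a Ha.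
  by case: (h (tail a)).
- move=> a b Ha Hb Hab W HW; exact: sig_wall.
Qed.

End Main.

Theorem corollary22 (V D : finType) (tail : D -> V) (e n : {perm D}) (o : D)
  (h : V -> bool) (phi : V -> bool * bool) :
  near_quadrangulation tail e n o ->
  (forall u v : V, adjH tail e u v -> h u != h v) ->
  viable_on_cycle (outer_boundary tail e n o)
    (fun v => @hueG V D e n o h (inl v)) phi ->
  (exists c : GV V e n o -> bool * bool,
      four_coloring (@adjG V D tail e n o) c /\
      forall v, v \in outer_boundary tail e n o -> c (inl v) = phi v) ->
  null_homotopic_on_cycle (outer_boundary tail e n o)
    (fun v => @hueG V D e n o h (inl v)) phi.
Proof.
move=> [Hs Hv Hc He H4] _ _ [c [Hcol Hphi]] g Hg.
exact: (main_nh Hs Hv Hc He H4 Hcol Hphi Hg).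
Qed.
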